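(* Let $G$ be a weighted finite graph, $F:V\to\mathbb{R}^k$ a map, $S\subseteq V$, and $0<\epsilon<2$. Define $\theta:V\to\mathbb{R}$ by $\theta(v)=0$ if $F(v)=0$ and $\theta(v)=\max\{0,1-\overline{d}_F(v,S\cap\widetilde{V}_F)/\epsilon\}$ otherwise, and set $\Psi:=\theta\cdot F:V\to\mathbb{R}^k$. Then for every edge $\{u,v\}\in E$, \[ \|\Psi(u)+\Psi(v)\|\leq\left(1+\frac{2}{\epsilon}\right)\|F(u)+F(v)\|. \]
   Context: $G=(V,E,w)$ is a finite undirected graph without self-loops with positive symmetric edge weights. $\|\cdot\|$ is the Euclidean norm on $\mathbb{R}^k$. $\widetilde{V}_F:=\{v\in V:F(v)\neq0\}$ and for $u,v\in\widetilde{V}_F$, \[ \overline{d}_F(u,v):=\min\left\{\left\|\tfrac{F(u)}{\|F(u)\|}-\tfrac{F(v)}{\|F(v)\|}\right\|,\left\|\tfrac{F(u)}{\|F(u)\|}+\tfrac{F(v)}{\|F(v)\|}\right\|\right\}; \] for $T\subseteq\widetilde{V}_F$, $\overline{d}_F(v,T):=\inf_{t\in T}\overline{d}_F(v,t)$ (with the convention $\inf\emptyset=+\infty$). *)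

(* Defs.v *)
From mathcomp Require Import all_boot all_order all_algebra.
From mathcomp Require Import reals constructive_ereal.
Set Implicit Arguments. Unset Strict Implicit. Unset Printing Implicit Defensive.
Import Order.TTheory GRing.Theory Num.Theory.
Local Open Scope ring_scope.

Section Defs.
Variables (R : realType) (V : finType) (k : nat).

Definition enorm (x : 'rV[R]_k) : R := Num.sqrt (\sum_(i < k) x 0 i ^+ 2).

Definition normalize (x : 'rV[R]_k) : 'rV[R]_k := (enorm x)^-1 *: x.

Definition Vtilde (F : V -> 'rV[R]_k) : {set V} := [set v | F v != 0].

Definition dbar (F : V -> 'rV[R]_k) (u v : V) : R :=
  Num.min (enorm (normalize (F u) - normalize (F v)))
          (enorm (normalize (F u) + normalize (F v))).

(* \overline d_F(v,T) = inf_{t in T} \overline d_F(v,t), with inf of empty set = +oo *)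
Definition dbar_set (F : V -> 'rV[R]_k) (v : V) (T : {set V}) : \bar R :=
  \big[Order.min/+oo%E]_(t in T) (dbar F v t)%:E.

(* theta(v) = 0 if F v = 0, else max{0, 1 - dbar_F(v, S ∩ Vtilde_F)/eps}
   (computed in the extended reals; the result is always finite). *)
Definition theta (F : V -> 'rV[R]_k) (S : {set V}) (eps : R) (v : V) : R :=
  if F v == 0 then 0
  else fine (Order.max 0%E (1%E - dbar_set F v (S :&: Vtilde F) * (eps^-1)%:E)%E).

Definition Psi (F : V -> 'rV[R]_k) (S : {set V}) (eps : R) (v : V) : 'rV[R]_k :=
  theta F S eps v *: F v.

End Defs.

Definition weighted_graph (R : realType) (V : finType) (E : rel V) (w : V -> V -> R) : Prop :=
  (forall u v, E u v = E v u) /\ (forall v, ~~ E v v) /\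
  (forall u v, E u v -> 0 < w u v) /\ (forall u v, w u v = w v u).

(* Main.v *)
Require Import Defs.
From mathcomp Require Import all_boot all_order all_algebra.
From mathcomp Require Import reals constructive_ereal.
From mathcomp Require Import ring lra.
Import Order.TTheory GRing.Theory Num.Theory.
Local Open Scope ring_scope.

Section Norm.
Variables (R : realType) (k : nat).
Implicit Types (x y : 'rV[R]_k).

Definition dot x y : R := \sum_(i < k) x 0 i * y 0 i.

Lemma dotC x y : dot x y = dot y x.
Proof. by apply: eq_bigr => i _; rewrite mulrC. Qed.

Lemma dotDl x y z : dot (x + y) z = dot x z + dot y z.
Proof. by rewrite /dot -big_split; apply: eq_bigr => i _; rewrite mxE mulrDl. Qed.

Lemma dotZl a x y : dot (a *: x) y = a * dot x y.
Proof. by rewrite /dot mulr_sumr; apply: eq_bigr => i _; rewrite mxE mulrA. Qed.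

Lemma dotNl x y : dot (- x) y = - dot x y.
Proof. by rewrite -scaleN1r dotZl mulN1r. Qed.

Lemma dotxx x : dot x x = \sum_(i < k) x 0 i ^+ 2.
Proof. by []. Qed.

Lemma dot_ge0 x : 0 <= dot x x.
Proof. by apply: sumr_ge0 => i _; rewrite -expr2 sqr_ge0. Qed.

Lemma enormE x : enorm x = Num.sqrt (dot x x).
Proof. by rewrite /enorm; congr Num.sqrt; apply: eq_bigr => i _; rewrite expr2. Qed.

Lemma enorm_ge0 x : 0 <= enorm x.
Proof. by rewrite sqrtr_ge0. Qed.

Lemma enorm_sq x : enorm x ^+ 2 = dot x x.
Proof. by rewrite enormE sqr_sqrtr // dot_ge0. Qed.

Lemma enorm_eq0 x : (enorm x == 0) = (x == 0).
Proof.
apply/idP/idP; last by move/eqP->; rewrite /enorm big1 ?sqrtr0 // => i _; rewrite mxE expr0n.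
rewrite enormE sqrtr_eq0 => h.
have h0 : dot x x = 0 by apply/eqP; rewrite eq_le h dot_ge0.
apply/eqP/matrixP => i j; rewrite mxE (ord1 i).
have := @psumr_eq0P _ _ xpredT (fun i => x 0 i * x 0 i) _ h0 j isT.
have H : forall l, xpredT l -> 0 <= x 0 l * x 0 l by move=> l _; rewrite -expr2 sqr_ge0.
move=> /(_ H) /eqP. by rewrite mulf_eq0 orbb => /eqP.
Qed.

Lemma dotDr x y z : dot x (y + z) = dot x y + dot x z.
Proof. by rewrite dotC dotDl !(dotC x). Qed.
Lemma dotZr a x y : dot x (a *: y) = a * dot x y.
Proof. by rewrite dotC dotZl dotC. Qed.
Lemma dotNr x y : dot x (- y) = - dot x y.
Proof. by rewrite dotC dotNl dotC. Qed.
Lemma dot0l y : dot 0 y = 0.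
Proof. by rewrite -(scale0r 0) dotZl mul0r. Qed.

Lemma CS x y : dot x y <= enorm x * enorm y.
Proof.
have [->|xn0] := eqVneq x 0; first by rewrite dot0l mulr_ge0 ?enorm_ge0.
have [->|yn0] := eqVneq y 0; first by rewrite dotC dot0l mulr_ge0 ?enorm_ge0.
set a := enorm x; set b := enorm y.
have a0 : 0 < a by rewrite lt_def enorm_eq0 xn0 enorm_ge0.
have b0 : 0 < b by rewrite lt_def enorm_eq0 yn0 enorm_ge0.
have := dot_ge0 (b *: x - a *: y).
rewrite !(dotDl, dotDr, dotNl, dotNr, dotZl, dotZr) -!enorm_sq -/a -/b (dotC y x).
move=> h.
have h2 : 0 <= a * b * (2 * (a * b - dot x y)) by nra.
have ab : 0 < a * b by rewrite mulr_gt0.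
rewrite pmulr_rge0 // in h2. lra.
Qed.

Lemma enorm_tri x y : enorm (x + y) <= enorm x + enorm y.
Proof.
have h := CS x y.
have : enorm (x + y) ^+ 2 <= (enorm x + enorm y) ^+ 2.
  rewrite enorm_sq !(dotDl, dotDr) (dotC y x) sqrrD -!enorm_sq. lra.
have := enorm_ge0 (x + y); have := enorm_ge0 x; have := enorm_ge0 y. nra.
Qed.

Lemma enormZ a x : enorm (a *: x) = `|a| * enorm x.
Proof.
by rewrite !enormE dotZl dotZr mulrA -expr2 sqrtrM ?sqr_ge0 // sqrtr_sqr.
Qed.

Lemma enormN x : enorm (- x) = enorm x.
Proof. by rewrite -scaleN1r enormZ normrN normr1 mul1r. Qed.

Lemma enormB x y : enorm (x - y) = enorm (y - x).
Proof. by rewrite -enormN opprB. Qed.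

Lemma normalizeK x : enorm x *: normalize x = x.
Proof.
have [->|xn0] := eqVneq x 0; first by rewrite /normalize !scaler0.
by rewrite /normalize scalerA divff ?scale1r // enorm_eq0.
Qed.

End Norm.
Arguments dot {R k}.
Arguments dotC {R k}.
Arguments dotDl {R k}.
Arguments dotZl {R k}.
Arguments dotNl {R k}.
Arguments dotxx {R k}.
Arguments dot_ge0 {R k}.
Arguments enormE {R k}.
Arguments enorm_ge0 {R k}.
Arguments enorm_sq {R k}.
Arguments enorm_eq0 {R k}.
Arguments dotDr {R k}.
Arguments dotZr {R k}.
Arguments dotNr {R k}.
Arguments dot0l {R k}.
Arguments CS {R k}.
Arguments enorm_tri {R k}.
Arguments enormZ {R k}.
Arguments enormN {R k}.
Arguments enormB {R k}.
Arguments normalizeK {R k}.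

Section Db.
Variables (R : realType) (k : nat).
Implicit Types (x y z : 'rV[R]_k).

Definition db x y : R := Num.min (enorm (normalize x - normalize y)) (enorm (normalize x + normalize y)).

Lemma db_ge0 x y : 0 <= db x y.
Proof. by rewrite /db le_min !enorm_ge0. Qed.

Lemma db_sym x y : db x y = db y x.
Proof. by rewrite /db; congr Num.min; [apply: enormB | rewrite addrC]. Qed.

Lemma db_tri x y z : db x z <= db x y + db y z.
Proof.
rewrite /db; set p := normalize x; set q := normalize y; set r := normalize z.
have t1 : enorm (p - r) <= enorm (p - q) + enorm (q - r).
  by have := enorm_tri (p - q) (q - r); rewrite addrA subrK.
have t2 : enorm (p + r) <= enorm (p - q) + enorm (q + r).
  by have := enorm_tri (p - q) (q + r); rewrite addrA subrK.
have t3 : enorm (p + r) <= enorm (p + q) + enorm (q - r).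
  by have := enorm_tri (p + q) (- (q - r)); rewrite enormN opprB addrAC addrA subrK.
have t4 : enorm (p - r) <= enorm (p + q) + enorm (q + r).
  by have := enorm_tri (p + q) (- (q + r)); rewrite enormN opprD addrA addrK.
rewrite !minEle.
case: (leP (enorm (p - r)) (enorm (p + r))) => h1;
case: (leP (enorm (p - q)) (enorm (p + q))) => h2;
case: (leP (enorm (q - r)) (enorm (q + r))) => h3; lra.
Qed.

Lemma db_le_plus x y : db x y <= enorm (normalize x + normalize y).
Proof. by rewrite /db ge_min lexx orbT. Qed.

Lemma key x y : x != 0 -> y != 0 -> enorm x <= enorm y ->
  db x y * enorm x <= 2 * enorm (x + y).
Proof.
move=> xn0 yn0 hab.
have a0 : 0 < enorm x by rewrite lt_def enorm_eq0 xn0 enorm_ge0.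
have b0 : 0 < enorm y by rewrite lt_def enorm_eq0 yn0 enorm_ge0.
set a := enorm x in a0 hab *; set b := enorm y in b0 hab *.
have e : a *: (normalize x + normalize y) = (x + y) + (a / b - 1) *: y.
  apply/matrixP => i j; rewrite /normalize -/a -/b !mxE.
  field; rewrite ?gt_eqF //.
have h1 : enorm (a *: (normalize x + normalize y)) = a * enorm (normalize x + normalize y).
  by rewrite enormZ ger0_norm // ltW.
have h2 : enorm ((x + y) + (a / b - 1) *: y) <= enorm (x + y) + (1 - a / b) * b.
  apply: le_trans (enorm_tri _ _) _; rewrite enormZ ler0_norm ?opprB -/b //.
  by rewrite subr_le0 ler_pdivrMr // mul1r.
have h3 : b <= enorm (x + y) + a.
  by have := enorm_tri (x + y) (- x); rewrite enormN addrC addKr.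
have h4 : (1 - a / b) * b = b - a by field; rewrite gt_eqF.
have h5 := db_le_plus x y. have h6 := db_ge0 x y.
rewrite -e h4 in h2; rewrite h1 in h2.
nra.
Qed.
End Db.
Arguments db {R k}.
Arguments db_ge0 {R k}.
Arguments db_sym {R k}.
Arguments db_tri {R k}.
Arguments db_le_plus {R k}.
Arguments key {R k}.

Section Core.
Variables (R : realType) (k : nat).
Implicit Types (x y : 'rV[R]_k).

Lemma core1 x y (a b eps : R) : 0 < eps -> 0 <= b <= 1 -> x != 0 -> y != 0 ->
  enorm x <= enorm y -> `|a - b| <= db x y / eps ->
  enorm (a *: x + b *: y) <= (1 + 2 / eps) * enorm (x + y).
Proof.
move=> e0 /andP[b0 b1] xn0 yn0 hxy hab.
have e : a *: x + b *: y = b *: (x + y) + (a - b) *: x.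
  by apply/matrixP => i j; rewrite !mxE; ring.
rewrite e; apply: le_trans (enorm_tri _ _) _.
rewrite !enormZ (ger0_norm b0).
have hk := key x y xn0 yn0 hxy.
have n1 := enorm_ge0 (x + y). have n2 := enorm_ge0 x.
have h1 : `|a - b| * enorm x <= db x y / eps * enorm x by rewrite ler_wpM2r.
have h2 : db x y / eps * enorm x <= 2 / eps * enorm (x + y).
  rewrite mulrAC [2 / _]mulrC -[X in _ <= X]mulrA [_ / _]mulrC ler_wpM2l //.
  by rewrite invr_ge0 ltW.
nra.
Qed.

Lemma core x y (a b eps : R) : 0 < eps -> 0 <= a <= 1 -> 0 <= b <= 1 ->
  (x = 0 -> a = 0) -> (y = 0 -> b = 0) ->
  (x != 0 -> y != 0 -> `|a - b| <= db x y / eps) ->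
  enorm (a *: x + b *: y) <= (1 + 2 / eps) * enorm (x + y).
Proof.
move=> e0 ha hb hx hy hab.
have c0 : 0 <= 2 / eps by rewrite divr_ge0 // ltW.
have [x0|xn0] := eqVneq x 0.
  rewrite (hx x0) x0 scale0r !add0r enormZ.
  case/andP: hb => b0 b1; rewrite ger0_norm //.
  have := enorm_ge0 y; nra.
have [y0|yn0] := eqVneq y 0.
  rewrite (hy y0) y0 scale0r !addr0 enormZ.
  case/andP: ha => a0 a1; rewrite ger0_norm //.
  have := enorm_ge0 x; nra.
have [hxy|hxy] := leP (enorm x) (enorm y).
  exact: (core1 x y a b eps) e0 hb xn0 yn0 hxy (hab xn0 yn0).
have hba : `|b - a| <= db y x / eps by rewrite distrC db_sym; exact: hab xn0 yn0.
rewrite (addrC (a *: x)) (addrC x); exact: (core1 y x b a eps) e0 ha yn0 xn0 (ltW hxy) hba.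
Qed.
End Core.

Section Theta.
Variables (R : realType) (V : finType) (k : nat) (F : V -> 'rV[R]_k) (S : {set V}) (eps : R).
Hypothesis e0 : 0 < eps.
Let T := S :&: Vtilde F.

Lemma dset_le v t : t \in T -> (dbar_set F v T <= (dbar F v t)%:E)%E.
Proof. by move=> tT; rewrite /dbar_set; apply: bigmin_le_cond. Qed.

Lemma dset_ex v t : t \in T -> exists2 t0, t0 \in T & dbar_set F v T = (dbar F v t0)%:E.
Proof.
move=> tT; rewrite /dbar_set (bigmin_eq_arg _ t) //; last by move=> i _; apply: leey.
by case: (arg_minP (fun i => (dbar F v i)%:E) tT) => t0 Ht0 _; exists t0.
Qed.

Lemma theta_fin v r : F v != 0 -> dbar_set F v T = r%:E ->
  theta F S eps v = Num.max 0 (1 - r / eps).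
Proof.
by move=> Fv0 h; rewrite /theta (negbTE Fv0) -/T h -EFinM -EFinB -EFin_max.
Qed.

Lemma theta_empty v : T = set0 -> theta F S eps v = 0.
Proof.
move=> T0; rewrite /theta; case: ifP => // _.
rewrite -/T /dbar_set T0 big_set0 gt0_mulye ?lte_fin ?invr_gt0 //=.
Qed.

Lemma max_lip (p q d : R) : p - q <= d -> q - p <= d ->
  `|Num.max 0 (1 - p) - Num.max 0 (1 - q)| <= d.
Proof.
move=> h1 h2; rewrite !maxEle ler_norml.
case: (leP 0 (1 - p)) => hp; case: (leP 0 (1 - q)) => hq; apply/andP; split; lra.
Qed.

Lemma theta_bnd v : 0 <= theta F S eps v <= 1.
Proof.
have [Fv0|Fvn0] := eqVneq (F v) 0; first by rewrite /theta Fv0 eqxx lexx ler01.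
have [T0|/set0Pn[t tT]] := eqVneq T set0; first by rewrite (theta_empty _ T0) lexx ler01.
have [t0 t0T h] := dset_ex v t tT.
rewrite (theta_fin _ _ Fvn0 h) le_max lexx /= ge_max ler01 /=.
have := db_ge0 (F v) (F t0); rewrite -/(dbar F v t0) => hd.
by rewrite lerBlDr lerDl divr_ge0 // ltW.
Qed.

Lemma theta_lip u v : F u != 0 -> F v != 0 ->
  `|theta F S eps u - theta F S eps v| <= dbar F u v / eps.
Proof.
move=> Fun0 Fvn0.
have dg : 0 <= dbar F u v / eps by rewrite divr_ge0 ?(ltW e0) // (db_ge0 (F u) (F v)).
have [T0|/set0Pn[t tT]] := eqVneq T set0; first by rewrite (theta_empty u T0) (theta_empty v T0) subrr normr0.
have [t0 t0T h0] := dset_ex u t tT.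
have [t1 t1T h1] := dset_ex v t tT.
rewrite (theta_fin _ _ Fun0 h0) (theta_fin _ _ Fvn0 h1).
have a1 := dset_le u t1 t1T; rewrite h0 lee_fin in a1.
have a2 := dset_le v t0 t0T; rewrite h1 lee_fin in a2.
have b1 : dbar F u t1 <= dbar F u v + dbar F v t1 := db_tri (F u) (F v) (F t1).
have b2 : dbar F v t0 <= dbar F v u + dbar F u t0 := db_tri (F v) (F u) (F t0).
have sy : dbar F v u = dbar F u v := db_sym (F v) (F u).
rewrite sy in b2.
apply: max_lip; rewrite -mulrBl ler_pM2r ?invr_gt0 //; lra.
Qed.
End Theta.

Theorem lemma5p3 (R : realType) (V : finType) (E : rel V) (w : V -> V -> R)
  (k : nat) (F : V -> 'rV[R]_k) (S : {set V}) (eps : R) :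
  weighted_graph E w -> 0 < eps -> eps < 2 ->
  forall u v, E u v ->
    enorm (Psi F S eps u + Psi F S eps v) <= (1 + 2 / eps) * enorm (F u + F v).
Proof.
move=> _ e0 _ u v _; rewrite /Psi.
apply: core => //.
- exact: (@theta_bnd _ _ _ F S eps e0 u).
- exact: (@theta_bnd _ _ _ F S eps e0 v).
- by move=> h; rewrite /theta h eqxx.
- by move=> h; rewrite /theta h eqxx.
- by move=> hu hv; exact: (@theta_lip _ _ _ F S eps e0 u v hu hv).
Qed.
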